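(* Let $k \in \mathbb{R}$ and let $M$ be a real symmetric matrix whose diagonal entries are all equal to $k$ and whose off-diagonal entries are integers. Suppose that the multiplicity of $0$ as an eigenvalue of $M$ is greater than the maximum multiplicity of the non-zero eigenvalues of $M$. Then $k$ is an integer. *)

(* Defs.v *)
From HB Require Import structures.
From mathcomp Require Import all_boot all_order all_algebra.
From mathcomp Require Import reals.
Set Implicit Arguments. Unset Strict Implicit. Unset Printing Implicit Defensive.
Import Order.TTheory GRing.Theory Num.Theory.
Local Open Scope ring_scope.

Definition eig_mult (R : realType) (n : nat) (M : 'M[R]_n) (a : R) : nat :=
  mup a (char_poly M).

(* Main.v *)
Require Import Defs.
From HB Require Import structures.
From mathcomp Require Import all_boot all_order all_algebra.
From mathcomp Require Import reals.
From mathcomp Require Import complex ring.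
Set Implicit Arguments. Unset Strict Implicit. Unset Printing Implicit Defensive.
Import Order.TTheory GRing.Theory Num.Theory.
Local Open Scope ring_scope.

Lemma char_poly_similar (F : fieldType) n (P D : 'M[F]_n) : P \in unitmx ->
  char_poly (invmx P *m D *m P) = char_poly D.
Proof.
move=> Pu; rewrite /char_poly /char_poly_mx.
have -> : 'X%:M - map_mx polyC (invmx P *m D *m P) =
  map_mx polyC (invmx P) *m ('X%:M - map_mx polyC D) *m map_mx polyC P.
  rewrite mulmxBr mulmxBl mul_mx_scalar -scalemxAl -map_mxM mulVmx // map_mx1 scalemx1 !map_mxM.
  by [].


rewrite !det_mulmx mulrC mulrA -det_mulmx -map_mxM mulmxV // map_mx1 det1 mul1r.
done.
Qed.

Lemma split_sym (R : realType) n (A : 'M[R]_n) : A^T = A ->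
  exists s : seq R, char_poly A = \prod_(x <- s) ('X - x%:P).
Proof.
move=> Asym.
pose f := real_complex R.
pose Ac := map_mx f A.
have Ah : Ac \is hermsymmx.
  apply: realsym_hermsym.
    apply/is_hermitianmxP; rewrite expr0 scale1r.
    apply/matrixP => i j; rewrite !mxE /=; congr f; by rewrite -[in LHS]Asym mxE.
  apply/'forall_forallP => i j; rewrite mxE; apply/complex_realP; by exists (A i j).
have /orthomx_spectralP Aeq := hermitian_normalmx Ah.
have dr := hermitian_spectral_diag_real Ah.
exists [seq complex.Re (spectral_diag Ac 0 i) | i <- enum 'I_n].
apply: (@map_poly_inj _ _ f).
rewrite map_char_poly -/Ac Aeq char_poly_similar ?spectral_unit //.
rewrite char_poly_trig ?diag_mx_is_trig // rmorph_prod big_map big_enum /=.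
apply: eq_bigr => i _; rewrite map_polyXsubC mxE eqxx mulr1n /f.
have /mxOverP/(_ 0 i) := dr.
move=> /RRe_real h; congr (_ - _%:P); rewrite -Aeq; exact: (esym h).
Qed.
Lemma rat_root_int (p : {poly int}) (y : rat) : p \is monic ->
  root (map_poly intr p) y -> y \is a Num.int.
Proof.
move=> mon_p qy0; set q := map_poly intr p : {poly rat}.
have mon_q : q \is monic by apply: monic_map.
pose d := (size q).-1.
have dvd: (denq y %| numq y ^+ d)%Z.
  pose p1 : {poly int} := 'X^d - p.
  have Dp1: (map_poly intr p1 : {poly rat}) = ('X^d - q) by rewrite rmorphB /= map_polyXn.
  apply/dvdzP; exists (\sum_(i < d) p1`_i * numq y ^+ i * denq y ^+ (d - i.+1)).
  apply: (@intr_inj rat); rewrite intrM rmorph_sum mulr_suml /=.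
  transitivity ((map_poly intr p1 : {poly rat}).[y] * (denq y ^+ d)%:~R).
    rewrite Dp1 !hornerE (rootP qy0) subr0.
    by rewrite !rmorphXn /= numqE exprMn.
  have sz_p1: (size (map_poly intr p1 : {poly rat}) <= d)%N.
    rewrite Dp1; apply/leq_sizeP=> i.
    rewrite leq_eqVlt eq_sym -polySpred ?monic_neq0 // coefB coefXn.
    case: eqP => [-> _ | _ /(nth_default 0)->//].
    by rewrite -lead_coefE (monicP mon_q) subrr.
  rewrite (horner_coef_wide _ sz_p1) mulr_suml; apply: eq_bigr => i _.
  rewrite coef_map !rmorphM !rmorphXn /= numqE exprMn.
  have -> : (denq y)%:~R ^+ d = (denq y)%:~R ^+ i * (denq y)%:~R ^+ (d - i.+1) * (denq y)%:~R :> rat.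
    by rewrite -mulrA -exprSr -exprD -addSnnS subnKC // ltn_ord.
  by rewrite !mulrA.
have cop: coprimez (denq y) (numq y ^+ d).
  by rewrite coprimez_sym coprimezXl //; apply: coprime_num_den.
rewrite Qint_def.
have: (denq y %| gcdz (denq y) (numq y ^+ d))%Z by rewrite dvdz_gcd dvdzz dvd.
rewrite (eqP cop) dvdz1 => /eqP h.
by move: (denq_gt0 y) h; case: (denq y) => [m|m] //= _ ->.
Qed.
Lemma mup_deriv (R : numFieldType) (p : {poly R}) y : p != 0 -> (0 < mup y p)%N ->
  p^`() != 0 /\ mup y p^`() = (mup y p).-1.
Proof.
move=> p0 mpos.
have : ('X - y%:P) ^+ (mup y p) %| p by rewrite -mup_geq.
case/dvdpP => h Ep.
have hy : ~~ root h y.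
  apply/negP => /rootP hy0.
  have : ('X - y%:P) ^+ (mup y p).+1 %| p.
    rewrite {2}Ep exprS dvdp_mul2r ?expf_neq0 ?polyXsubC_eq0 //.
    by rewrite dvdp_XsubCl; apply/rootP.
  by rewrite -mup_geq // ltnn.
move: mpos Ep; case: (mup y p) => [//|mu] _ Ep /=.
pose g := h^`() * ('X - y%:P) + h *+ mu.+1.
have Ed : p^`() = g * ('X - y%:P) ^+ mu.
  rewrite Ep derivM deriv_exp derivXsubC mul1r /g mulrDl -mulrA -exprS.
  by rewrite /= mulrnAr mulrnAl.
have gy : ~~ root g y.
  rewrite /root /g !hornerE subrr mulr0 add0r.
  by rewrite hornerMn mulrn_eq0 negb_or /=; exact: hy.
have g0 : g != 0 by apply: contraNneq gy => ->; rewrite root0.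
split.
  by rewrite Ed mulf_neq0 ?expf_neq0 ?polyXsubC_eq0.
by rewrite Ed mupMr // mup_XsubCX eqxx.
Qed.

Lemma mup_derivn (R : numFieldType) (p : {poly R}) y j : p != 0 ->
  (j <= mup y p)%N -> p^`(j) != 0 /\ mup y p^`(j) = (mup y p - j)%N.
Proof.
move=> p0; elim: j => [|j IH] hj; first by rewrite derivn0 subn0.
have [h0 h1] := IH (ltnW hj).
have hp : (0 < mup y p^`(j))%N by rewrite h1 subn_gt0.
have [h2 h3] := mup_deriv h0 hp.
by rewrite derivnS; split => //; rewrite h3 h1 subnS.
Qed.

Lemma key (R : realType) (qQ : {poly rat}) (s : seq R) (r : R) :
  map_poly ratr qQ = \prod_(t <- s) ('X - t%:P) ->
  (forall t, t != r -> (count_mem t s < count_mem r s)%N) ->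
  exists x : rat, r = ratr x.
Proof.
move=> Eq hs.
set q := map_poly (@ratr R) qQ.
have {}Eq : q = \prod_(t <- s) ('X - t%:P) := Eq.
have q0 : q != 0 by rewrite Eq monic_neq0 // monic_prod_XsubC.
have muq t : mup t q = count_mem t s by rewrite Eq mu_prod_XsubC.
set m := count_mem r s.
have m0 : (0 < m)%N.
  have : r + 1 != r by rewrite -subr_eq0 addrC addKr oner_eq0.
  by move/hs; apply: leq_ltn_trans.
pose G := \big[@gcdp rat/0]_(j < m) qQ^`(j).
pose GR := \big[@gcdp R/0]_(j < m) q^`(j).
have EG : map_poly ratr G = GR.
  rewrite /G (big_morph _ (gcdp_map _) (rmorph0 _)).
  by apply: eq_bigr => j _; rewrite derivn_map.
have dvdG d : (d %| GR) = [forall j : 'I_m, d %| q^`(j)].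
  by rewrite /GR (big_morph (fun p => d %| p) (dvdp_gcd d) (dvdp0 d)) big_andE.
have rootG y : root GR y = (m <= count_mem y s)%N.
  rewrite -dvdp_XsubCl dvdG; apply/forallP/idP => [H|H j].
    rewrite leqNgt; apply/negP => lt.
    have [h0 h1] := @mup_derivn R q y (mup y q) q0 (leqnn _).
    have lt' : (mup y q < m)%N by rewrite muq.
    have := H (Ordinal lt').
    by rewrite /= XsubC_dvd // h1 subnn.
  have jm : (j <= mup y q)%N by rewrite muq; apply: leq_trans H; apply: ltnW.
  have [h0 h1] := @mup_derivn R q y j q0 jm.
  by rewrite XsubC_dvd // h1 subn_gt0 muq; apply: leq_trans H.
have GRq : GR %| q.
  by have := dvdpp GR; rewrite dvdG => /forallP/(_ (Ordinal m0)); rewrite derivn0.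
have GR0 : GR != 0.
  by apply: contraNneq q0 => GR0; move: GRq; rewrite GR0 dvd0p.
rewrite Eq in GRq.
have [b Eb] := @dvdp_prod_XsubC _ _ s id GR GRq.
have allu : all (pred1 r) (mask b s).
  apply/allP => t tu /=; apply/negPn/negP => /hs.
  have : root GR t by rewrite (eqp_root Eb) root_prod_XsubC.
  by rewrite rootG -/m leqNgt => /negP.
have /all_pred1P Eu := allu.
pose j := size (mask b s).
have EP : \prod_(t <- mask b s) ('X - (id t)%:P) = char_poly (r%:M : 'M[R]_j).
  rewrite [in LHS]Eu big_nseq char_poly_trig ?scalar_mx_is_trig //.
  rewrite -/j -big_const_ord; apply: eq_bigr => i _; rewrite mxE eqxx mulr1n.
  done.
rewrite EP in Eb.
have j0 : (0 < j)%N.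
  have H0 k (A : 'M[R]_k) : root (char_poly A) r -> (0 < k)%N.
    by case: k A => // A; rewrite /char_poly det_mx00 /root hornerE oner_eq0.
  apply: (H0 _ (r%:M)); rewrite -(eqp_root Eb) rootG.
  done.
have Pj : (char_poly (r%:M : 'M[R]_j))`_j = 1.
  by have := char_poly_monic (r%:M : 'M[R]_j); rewrite monicE lead_coefE size_char_poly => /eqP.
have Pj1 : (char_poly (r%:M : 'M[R]_j))`_j.-1 = - (r *+ j).
  by rewrite char_poly_trace // mxtrace_scalar.
case/eqpP: Eb => [[c1 c2]] /= /andP[c10 c20] Ec.
have e1 := congr1 (fun p : {poly R} => p`_j) Ec.
have e2 := congr1 (fun p : {poly R} => p`_j.-1) Ec.
rewrite /= !coefZ Pj Pj1 -EG !coef_map /= mulr1 in e1 e2.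
exists (- G`_j.-1 / (G`_j * j%:R)).
have a0 : ratr G`_j != 0 :> R.
  by apply: contraNneq c20 => h; rewrite -e1 h mulr0.
have hb : ratr G`_j.-1 = - (ratr G`_j * r * j%:R) :> R.
  apply: (mulfI c10); rewrite e2 -e1 -mulr_natr; ring.
have jn : (j%:R : R) != 0 by rewrite pnatr_eq0 -lt0n.
have h1 := rmorphN (@ratr R) (G`_j.-1 / (G`_j * j%:R)). rewrite mulNr h1. rewrite fmorph_div rmorphM /= ratr_nat hb.
by field; rewrite a0 jn.
Qed.

Theorem lemma2p4 (R : realType) (n : nat) (M : 'M[R]_n) (k : R)
  (Hsym : M^T = M)
  (Hdiag : forall i : 'I_n, M i i = k)
  (Hoff : forall i j : 'I_n, i != j -> M i j \is a Num.int)
  (Hmult : forall a : R, a != 0 -> (eig_mult M a < eig_mult M 0)%N) :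
  k \is a Num.int.
Proof.
pose A := M - k%:M.
have Asym : A^T = A by rewrite /A raddfB /= tr_scalar_mx Hsym.
have [s Es] := split_sym Asym.
pose Az : 'M[int]_n := \matrix_(i, j) if i == j then 0 else Num.floor (M i j).
have EA : A = map_mx intr Az.
  apply/matrixP => i j; rewrite !mxE; case: eqP => [->|/eqP ij].
    by rewrite Hdiag mulr1n subrr.
  by rewrite mulr0n subr0 floorK // Hoff.
have EM : char_poly M = \prod_(t <- s) ('X - (t + k)%:P).
  have -> : char_poly M = (char_poly A) \Po ('X - k%:P).
    rewrite /char_poly -det_map_mx; congr (\det _).
    apply/matrixP => i j; rewrite !mxE; case: eqP => _ /=.
      by rewrite !mulr1n comp_polyB comp_polyX comp_polyC polyCB; ring.
    by rewrite !mulr0n !subr0 !sub0r rmorphN /= comp_polyC.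
  rewrite Es rmorph_prod; apply: eq_bigr => t _ /=.
  by rewrite comp_polyB comp_polyX comp_polyC polyCD; ring.
have mult a : eig_mult M a = count_mem (a - k) s.
  rewrite /eig_mult EM -(big_map (fun t => t + k) xpredT (fun x => 'X - x%:P)).
  rewrite mu_prod_XsubC count_map; apply: eq_count => t /=.
  by apply/eqP/eqP => [<-|->]; rewrite ?addrK ?subrK.
have hs t : t != - k -> (count_mem t s < count_mem (- k) s)%N.
  move=> tk; have : t + k != 0 by rewrite addr_eq0.
  by move/Hmult; rewrite !mult addrK sub0r.
have EqZ : map_poly (@ratr R) (map_poly intr (char_poly Az)) =
    \prod_(t <- s) ('X - t%:P).
  rewrite -Es EA -map_char_poly -map_poly_comp; apply: eq_map_poly => z /=.
  exact: ratr_int.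
have [x Ex] := key EqZ hs.
have : root (map_poly (@ratr R) (map_poly intr (char_poly Az))) (- k).
  rewrite EqZ root_prod_XsubC -has_pred1 has_count.
  have : - k + 1 != - k by rewrite -subr_eq0 addrC addKr oner_eq0.
  by move/hs; apply: leq_ltn_trans.
rewrite Ex fmorph_root => /(rat_root_int (char_poly_monic Az)) xi.
have -> : k = - ratr x by rewrite -Ex opprK.
by rewrite rpredN -(floorK xi) ratr_int intr_int.
Qed.
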